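(* Let $p$ be a two-phase solution. At every point where $p\neq 0$ (so $\nu_1>0$), $$\begin{aligned} \Sigma_1&=-\tfrac12\tfrac{\nu_2}{\nu_1}+\Lambda_1,\\ \Sigma_2&=-\tfrac14\Lambda_1\tfrac{\nu_2}{\nu_1}-\tfrac14\nu_1+\tfrac{-\frac5{64}\Lambda_1^4+\frac38\Lambda_1^2\Lambda_2-\frac14\Lambda_2^2-\frac12\Lambda_1\Lambda_3+\Lambda_4}{\nu_1}+\tfrac12\Lambda_2+\tfrac18\Lambda_1^2,\\ \Sigma_3&=\tfrac14\nu_2+\big(\tfrac1{16}\Lambda_1^2-\tfrac14\Lambda_2\big)\tfrac{\nu_2}{\nu_1}-\tfrac14\Lambda_1\nu_1+\tfrac{\frac1{64}\Lambda_1^5-\frac18\Lambda_1^3\Lambda_2+\frac18\Lambda_1^2\Lambda_3+\frac14\Lambda_1\Lambda_2^2-\frac12\Lambda_2\Lambda_3+\Lambda_5}{\nu_1}+\tfrac12\Lambda_3,\\ \Sigma_4&=\tfrac18\Lambda_1\nu_2-\tfrac1{16}\tfrac{\nu_2^2}{\nu_1}-\tfrac1{16}\Lambda_1^2\nu_1+\big(-\tfrac1{32}\Lambda_1^3+\tfrac18\Lambda_1\Lambda_2-\tfrac14\Lambda_3\big)\tfrac{\nu_2}{\nu_1}\\ &\quad+\tfrac{-\frac1{256}\Lambda_1^6+\frac1{32}\Lambda_1^4\Lambda_2-\frac1{16}\Lambda_1^3\Lambda_3-\frac1{16}\Lambda_1^2\Lambda_2^2+\frac14\Lambda_1\Lambda_2\Lambda_3-\frac14\Lambda_3^2+\Lambda_6}{\nu_1}+\tfrac1{32}\Lambda_1^4-\tfrac18\Lambda_1^2\Lambda_2+\tfrac14\Lambda_1\Lambda_3.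 \end{aligned}$$
   Context: Let $p(x,t)$, $(x,t)\in\mathbb R^2$, be a smooth complex-valued solution of the focusing nonlinear Schrödinger equation $ip_t+p_{xx}+2|p|^2p=0$; $^*$ denotes complex conjugation and subscripts denote partial derivatives. Put $\mathbb U=\begin{pmatrix}-i\lambda& ip\\ ip^*& i\lambda\end{pmatrix}$ and $\mathbb V=\begin{pmatrix}-2i\lambda^2+i|p|^2& 2i\lambda p-p_x\\ 2i\lambda p^*+p^*_x& 2i\lambda^2-i|p|^2\end{pmatrix}$. The solution $p$ is called a two-phase solution if there exist real constants $c_0,c_1,c_2$ such that the matrix $\Psi=\begin{pmatrix}\Psi_{11}&\Psi_{12}\\ \Psi_{21}&-\Psi_{11}\end{pmatrix}$ with $\Psi_{11}=-i\lambda^3-ic_2\lambda^2+(\tfrac12 i|p|^2-ic_1)\lambda+\tfrac14(pp^*_x-p_xp^* )+\tfrac12 ic_2|p|^2-ic_0$, $\Psi_{12}=ip\lambda^2+(-\tfrac12p_x+ic_2p)\lambda-\tfrac14 ip_{xx}-\tfrac12 ip|p|^2-\tfrac12c_2p_x+ic_1p$, $\Psi_{21}=ip^*\lambda^2+(\tfrac12p^*_x+ic_2p^* )\lambda-\tfrac14 ip^*_{xx}-\tfrac12 ip^*|p|^2+\tfrac12c_2p^*_x+ic_1p^*$ satisfies $\Psi_x=[\mathbb U,\Psi]$ and $\Psi_t=[\mathbb V,\Psi]$ identically in $\lambda\in\mathbb C$. Set $\nu_1=|p|^2$ and $\nu_2=i(p^*p_x-pp^*_x)$ (both real). The polynomial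 $\mathscr R(\lambda)=-\Psi_{11}^2-\Psi_{12}\Psi_{21}$ is monic of degree 6 and independent of $(x,t)$; write $\mathscr R(\lambda)=\prod_{i=1}^6(\lambda-\lambda_i)$ and let $\Lambda_k$ denote the $k$-th elementary symmetric polynomial of $\lambda_1,\dots,\lambda_6$, so $\mathscr R(\lambda)=\sum_{k=0}^6(-1)^k\Lambda_k\lambda^{6-k}$ with $\Lambda_0=1$. At points where $p\neq0$ the Dirichlet eigenvalues $\mu_1,\mu_2$ are defined (up to order) by $\Psi_{12}(\lambda)=ip(\lambda-\mu_1)(\lambda-\mu_2)$, and $\Sigma_1,\dots,\Sigma_4$ denote the elementary symmetric polynomials of $\mu_1,\mu_2,\mu_1^*,\mu_2^*$, i.e. $(\mu-\mu_1)(\mu-\mu_2)(\mu-\mu_1^* )(\mu-\mu_2^* )=\mu^4-\Sigma_1\mu^3+\Sigma_2\mu^2-\Sigma_3\mu+\Sigma_4$. *)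

(* Defs.v *)
From Stdlib Require Import Reals List.
Import ListNotations.
Open Scope R_scope.

Record CC := mkC { Re : R; Im : R }.
Definition Cr (r : R) : CC := mkC r 0.
Definition C0 : CC := Cr 0.
Definition C1 : CC := Cr 1.
Definition Ci : CC := mkC 0 1.
Definition Cadd (z w : CC) : CC := mkC (Re z + Re w) (Im z + Im w).
Definition Copp (z : CC) : CC := mkC (- Re z) (- Im z).
Definition Csub (z w : CC) : CC := Cadd z (Copp w).
Definition Cmul (z w : CC) : CC :=
  mkC (Re z * Re w - Im z * Im w) (Re z * Im w + Im z * Re w).
Definition Cconj (z : CC) : CC := mkC (Re z) (- Im z).
Definition Cinv (z : CC) : CC :=
  mkC (Re z / (Re z * Re z + Im z * Im z)) (- Im z / (Re z * Re z + Im z * Im z)).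
Definition Cdiv (z w : CC) : CC := Cmul z (Cinv w).
Fixpoint Cpow (z : CC) (n : nat) : CC :=
  match n with O => C1 | S m => Cmul z (Cpow z m) end.

Declare Scope Cx_scope.
Delimit Scope Cx_scope with Cx.
Bind Scope Cx_scope with CC.
Infix "+" := Cadd : Cx_scope.
Infix "-" := Csub : Cx_scope.
Infix "*" := Cmul : Cx_scope.
Infix "/" := Cdiv : Cx_scope.
Notation "- z" := (Copp z) : Cx_scope.
Infix "^" := Cpow : Cx_scope.

Definition cont2 (f : R -> R -> R) : Prop :=
  forall x t eps, eps > 0 -> exists delta, delta > 0 /\
    forall y s, Rabs (y - x) < delta -> Rabs (s - t) < delta ->
      Rabs (f y s - f x t) < eps.

(* D i j is the partial derivative d_x^i d_t^j of p; p is CC^infinity: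
   all these partial derivatives exist and are continuous. *)
Definition smooth_derivs (p : R -> R -> CC) (D : nat -> nat -> R -> R -> CC) : Prop :=
  (forall x t, D 0%nat 0%nat x t = p x t) /\
  forall (i j : nat),
    cont2 (fun x t => Re (D i j x t)) /\ cont2 (fun x t => Im (D i j x t)) /\
    forall x t,
      derivable_pt_lim (fun y => Re (D i j y t)) x (Re (D (S i) j x t)) /\
      derivable_pt_lim (fun y => Im (D i j y t)) x (Im (D (S i) j x t)) /\
      derivable_pt_lim (fun s => Re (D i j x s)) t (Re (D i (S j) x t)) /\
      derivable_pt_lim (fun s => Im (D i j x s)) t (Im (D i (S j) x t)).

Definition pder_x (F : R -> R -> CC) (x t : R) (L : CC) : Prop :=
  derivable_pt_lim (fun y => Re (F y t)) x (Re L) /\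
  derivable_pt_lim (fun y => Im (F y t)) x (Im L).
Definition pder_t (F : R -> R -> CC) (x t : R) (L : CC) : Prop :=
  derivable_pt_lim (fun s => Re (F x s)) t (Re L) /\
  derivable_pt_lim (fun s => Im (F x s)) t (Im L).

Definition NLS (p : R -> R -> CC) (D : nat -> nat -> R -> R -> CC) : Prop :=
  forall x t, (Ci * D 0%nat 1%nat x t + D 2%nat 0%nat x t
               + Cr 2 * (p x t * Cconj (p x t)) * p x t)%Cx = C0.

Record M2 := mkM { m11 : CC; m12 : CC; m21 : CC; m22 : CC }.
Definition Mmul (A B : M2) : M2 :=
  mkM (m11 A * m11 B + m12 A * m21 B)%Cx (m11 A * m12 B + m12 A * m22 B)%Cx
      (m21 A * m11 B + m22 A * m21 B)%Cx (m21 A * m12 B + m22 A * m22 B)%Cx.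
Definition Msub (A B : M2) : M2 :=
  mkM (m11 A - m11 B)%Cx (m12 A - m12 B)%Cx (m21 A - m21 B)%Cx (m22 A - m22 B)%Cx.
Definition Mcomm (A B : M2) : M2 := Msub (Mmul A B) (Mmul B A).

Open Scope Cx_scope.

Definition Umat (p l : CC) : M2 :=
  mkM (- (Ci * l)) (Ci * p) (Ci * Cconj p) (Ci * l).

Definition Vmat (p px l : CC) : M2 :=
  mkM (- (Cr 2 * Ci * l ^ 2) + Ci * (p * Cconj p))
      (Cr 2 * Ci * l * p - px)
      (Cr 2 * Ci * l * Cconj p + Cconj px)
      (Cr 2 * Ci * l ^ 2 - Ci * (p * Cconj p)).

Definition Psi11 (p px pxx : CC) (c0 c1 c2 : R) (l : CC) : CC :=
  - (Ci * l ^ 3) - Ci * Cr c2 * l ^ 2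
  + (Cr (1/2) * Ci * (p * Cconj p) - Ci * Cr c1) * l
  + Cr (1/4) * (p * Cconj px - px * Cconj p)
  + Cr (1/2) * Ci * Cr c2 * (p * Cconj p) - Ci * Cr c0.

Definition Psi12 (p px pxx : CC) (c0 c1 c2 : R) (l : CC) : CC :=
  Ci * p * l ^ 2 + (- (Cr (1/2) * px) + Ci * Cr c2 * p) * l
  - Cr (1/4) * Ci * pxx - Cr (1/2) * Ci * p * (p * Cconj p)
  - Cr (1/2) * Cr c2 * px + Ci * Cr c1 * p.

Definition Psi21 (p px pxx : CC) (c0 c1 c2 : R) (l : CC) : CC :=
  Ci * Cconj p * l ^ 2 + (Cr (1/2) * Cconj px + Ci * Cr c2 * Cconj p) * l
  - Cr (1/4) * Ci * Cconj pxx - Cr (1/2) * Ci * Cconj p * (p * Cconj p)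
  + Cr (1/2) * Cr c2 * Cconj px + Ci * Cr c1 * Cconj p.

Definition PsiM (p px pxx : CC) (c0 c1 c2 : R) (l : CC) : M2 :=
  mkM (Psi11 p px pxx c0 c1 c2 l) (Psi12 p px pxx c0 c1 c2 l)
      (Psi21 p px pxx c0 c1 c2 l) (- Psi11 p px pxx c0 c1 c2 l).

Definition PsiAt (p : R -> R -> CC) (D : nat -> nat -> R -> R -> CC)
    (c0 c1 c2 : R) (x t : R) (l : CC) : M2 :=
  PsiM (p x t) (D 1%nat 0%nat x t) (D 2%nat 0%nat x t) c0 c1 c2 l.

Definition entries_pder (pd : (R -> R -> CC) -> R -> R -> CC -> Prop)
    (F : R -> R -> M2) (x t : R) (L : M2) : Prop :=
  pd (fun y s => m11 (F y s)) x t (m11 L) /\ pd (fun y s => m12 (F y s)) x t (m12 L) /\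
  pd (fun y s => m21 (F y s)) x t (m21 L) /\ pd (fun y s => m22 (F y s)) x t (m22 L).

Definition two_phase (p : R -> R -> CC) (D : nat -> nat -> R -> R -> CC)
    (c0 c1 c2 : R) : Prop :=
  forall (l : CC) (x t : R),
    entries_pder pder_x (fun y s => PsiAt p D c0 c1 c2 y s l) x t
      (Mcomm (Umat (p x t) l) (PsiAt p D c0 c1 c2 x t l)) /\
    entries_pder pder_t (fun y s => PsiAt p D c0 c1 c2 y s l) x t
      (Mcomm (Vmat (p x t) (D 1%nat 0%nat x t) l) (PsiAt p D c0 c1 c2 x t l)).

Definition Rpoly (P : M2) : CC := - (m11 P ^ 2) - m12 P * m21 P.

Fixpoint esym (s : list CC) (k : nat) : CC :=
  match k with
  | O => C1
  | S k' => match s with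
            | nil => C0
            | a :: s' => esym s' k + a * esym s' k'
            end
  end.

Definition prodlin (s : list CC) (z : CC) : CC :=
  fold_right (fun a acc => (z - a) * acc) C1 s.

Close Scope Cx_scope.

(* Main.v *)
Require Import Defs.
From Stdlib Require Import Reals List Lra Field.
Import ListNotations.
Open Scope R_scope.

Lemma Ceq (z w : CC) : Re z = Re w -> Im z = Im w -> z = w.
Proof. destruct z, w; simpl; intros; subst; reflexivity. Qed.

Lemma CC_ring : ring_theory C0 Defs.C1 Cadd Cmul Csub Copp (@eq CC).
Proof.
  constructor; intros; apply Ceq; unfold C0, Defs.C1, Cr, Cadd, Cmul, Csub, Copp; simpl; ring.
Qed.

Lemma C1_neq_C0 : Defs.C1 <> C0.
Proof. intro H. assert (H1 := f_equal Re H). unfold Defs.C1, C0, Cr in H1; simpl in H1. lra. Qed.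

Lemma CC_field : field_theory C0 Defs.C1 Cadd Cmul Csub Copp Cdiv Cinv (@eq CC).
Proof.
  constructor.
  - exact CC_ring.
  - exact C1_neq_C0.
  - reflexivity.
  - intros [a b] Hz. apply Ceq; unfold Defs.C1, Cr, Cmul, Cinv; simpl.
    + assert (a*a+b*b <> 0).
      { intro H0. apply Hz. assert (a = 0) by nra. assert (b=0) by nra. subst. reflexivity. }
      field; auto.
    + assert (a*a+b*b <> 0).
      { intro H0. apply Hz. assert (a = 0) by nra. assert (b=0) by nra. subst. reflexivity. }
      field; auto.
Qed.

Add Field CCfield : CC_field.


Lemma poly6R (d0 d1 d2 d3 d4 d5 d6 : R) :
  (forall r : R, d0 + r*(d1 + r*(d2 + r*(d3 + r*(d4 + r*(d5 + r*d6)))))= 0) ->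
  d0 = 0 /\ d1 = 0 /\ d2 = 0 /\ d3 = 0 /\ d4 = 0 /\ d5 = 0 /\ d6 = 0.
Proof.
  intro H. pose proof (H 0) as H0. pose proof (H 1) as H1. pose proof (H (-1)) as H2.
  pose proof (H 2) as H3. pose proof (H (-2)) as H4. pose proof (H 3) as H5.
  pose proof (H (-3)) as H6. clear H.
  repeat split; lra.
Qed.

Open Scope Cx_scope.

Lemma poly6C (d0 d1 d2 d3 d4 d5 d6 : CC) :
  (forall l : CC, d0 + l*(d1 + l*(d2 + l*(d3 + l*(d4 + l*(d5 + l*d6)))))= C0) ->
  d0 = C0 /\ d1 = C0 /\ d2 = C0 /\ d3 = C0 /\ d4 = C0 /\ d5 = C0 /\ d6 = C0.
Proof.
  intro H.
  assert (HR : forall r:R, (Re d0 + r*(Re d1 + r*(Re d2 + r*(Re d3 + r*(Re d4 + r*(Re d5 + r*Re d6))))) = 0)%R).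
  { intro r. pose proof (f_equal Re (H (Cr r))) as E. unfold C0, Cr in E. simpl in E. rewrite <- E. ring. }
  assert (HI : forall r:R, (Im d0 + r*(Im d1 + r*(Im d2 + r*(Im d3 + r*(Im d4 + r*(Im d5 + r*Im d6))))) = 0)%R).
  { intro r. pose proof (f_equal Im (H (Cr r))) as E. unfold C0, Cr in E. simpl in E. rewrite <- E. ring. }
  apply poly6R in HR. apply poly6R in HI.
  destruct HR as (?&?&?&?&?&?&?). destruct HI as (?&?&?&?&?&?&?).
  repeat split; apply Ceq; simpl; assumption.
Qed.

Lemma Cconj_add z w : Cconj (z + w) = Cconj z + Cconj w.
Proof. apply Ceq; simpl; ring. Qed.
Lemma Cconj_sub z w : Cconj (z - w) = Cconj z - Cconj w.
Proof. apply Ceq; simpl; ring. Qed.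
Lemma Cconj_mul z w : Cconj (z * w) = Cconj z * Cconj w.
Proof. apply Ceq; simpl; ring. Qed.
Lemma Cconj_opp z : Cconj (- z) = - Cconj z.
Proof. apply Ceq; simpl; ring. Qed.
Lemma Cconj_inv z : Cconj (Cinv z) = Cinv (Cconj z).
Proof. destruct z as [a b]. unfold Cinv, Cconj; simpl.
  replace (- b * - b)%R with (b*b)%R by ring. apply Ceq; simpl; unfold Rdiv; ring. Qed.
Lemma Cconj_div z w : Cconj (z / w) = Cconj z / Cconj w.
Proof. unfold Cdiv. rewrite Cconj_mul, Cconj_inv. reflexivity. Qed.
Lemma Cconj_conj z : Cconj (Cconj z) = z.
Proof. apply Ceq; simpl; ring. Qed.
Lemma Cconj_Cr r : Cconj (Cr r) = Cr r.
Proof. apply Ceq; simpl; ring. Qed.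
Lemma Cconj_Ci : Cconj Ci = - Ci.
Proof. apply Ceq; simpl; ring. Qed.
Lemma Ci2 : Ci * Ci = - Defs.C1.
Proof. apply Ceq; simpl; ring. Qed.
Lemma Ci_nz : Ci <> C0.
Proof. intro H. pose proof (f_equal Im H) as E. simpl in E. lra. Qed.
Lemma conj_nz z : z <> C0 -> Cconj z <> C0.
Proof. intros H E. apply H. pose proof (f_equal Re E). pose proof (f_equal Im E).
  simpl in *. apply Ceq; simpl; lra. Qed.
Lemma nu_nz z : z <> C0 -> z * Cconj z <> C0.
Proof. destruct z as [a b]; intros H E. apply H. pose proof (f_equal Re E) as E1.
  simpl in E1. assert (a = 0)%R by nra. assert (b = 0)%R by nra. subst. reflexivity. Qed.
Lemma subeq0 a b : a - b = C0 -> a = b.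
Proof. intro H. transitivity (a - b + b). ring. rewrite H. ring. Qed.
Lemma subeq0' a b : a - b = C0 -> b = a.
Proof. intro H. symmetry. apply subeq0; exact H. Qed.
Lemma addeq0 a b : a + b = C0 -> b = - a.
Proof. intro H. transitivity (a + b - a). ring. rewrite H. ring. Qed.
Lemma addeq0' a b : a + b = C0 -> a = - b.
Proof. intro H. transitivity (a + b - b). ring. rewrite H. ring. Qed.
Definition C2 := Defs.C1 + Defs.C1.
Lemma C2_nz : C2 <> C0.
Proof. intro H. pose proof (f_equal Re H) as E. unfold C2, Defs.C1, C0, Cr in E; simpl in E. lra. Qed.
Lemma k2 : Cr (1/2) = Defs.C1 / C2.
Proof. apply Ceq; unfold C2, Defs.C1, Cr; simpl; field. Qed.
Lemma k4 : Cr (1/4) = Defs.C1 / (C2*C2).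
Proof. apply Ceq; unfold C2, Defs.C1, Cr; simpl; field. Qed.
Lemma k8 : Cr (1/8) = Defs.C1 / (C2*C2*C2).
Proof. apply Ceq; unfold C2, Defs.C1, Cr; simpl; field. Qed.
Lemma k16 : Cr (1/16) = Defs.C1 / (C2*C2*C2*C2).
Proof. apply Ceq; unfold C2, Defs.C1, Cr; simpl; field. Qed.
Lemma k32 : Cr (1/32) = Defs.C1 / (C2*C2*C2*C2*C2).
Proof. apply Ceq; unfold C2, Defs.C1, Cr; simpl; field. Qed.
Lemma k64 : Cr (1/64) = Defs.C1 / (C2*C2*C2*C2*C2*C2).
Proof. apply Ceq; unfold C2, Defs.C1, Cr; simpl; field. Qed.
Lemma k256 : Cr (1/256) = Defs.C1 / (C2*C2*C2*C2*C2*C2*C2*C2).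
Proof. apply Ceq; unfold C2, Defs.C1, Cr; simpl; field. Qed.
Lemma k564 : Cr (5/64) = (C2*C2+Defs.C1) / (C2*C2*C2*C2*C2*C2).
Proof. apply Ceq; unfold C2, Defs.C1, Cr; simpl; field. Qed.
Lemma k38 : Cr (3/8) = (C2+Defs.C1) / (C2*C2*C2).
Proof. apply Ceq; unfold C2, Defs.C1, Cr; simpl; field. Qed.
Lemma oppCi_nz : - Ci <> C0.
Proof. intro H. pose proof (f_equal Im H) as E. simpl in E. lra. Qed.
Ltac nzt := first [ assumption | exact Ci_nz | exact oppCi_nz
  | (let E := fresh in intro E; apply (f_equal Re) in E; unfold C0, Cr in E; simpl in E; lra) ].
Lemma eq_sub a b c : a = b -> c = a - b -> c = C0.
Proof. intros -> ->. ring. Qed.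
Theorem mainTheorem8
  (p : R -> R -> CC) (D : nat -> nat -> R -> R -> CC) (c0 c1 c2 : R)
  (Hsmooth : smooth_derivs p D) (Hnls : NLS p D) (Htwo : two_phase p D c0 c1 c2)
  (x t : R) (Hp : p x t <> C0)
  (l1 l2 l3 l4 l5 l6 : CC)
  (HR : forall l : CC, Rpoly (PsiAt p D c0 c1 c2 x t l)
                      = prodlin [l1; l2; l3; l4; l5; l6] l)
  (mu1 mu2 : CC)
  (Hmu : forall l : CC, m12 (PsiAt p D c0 c1 c2 x t l)
                       = Ci * p x t * (l - mu1) * (l - mu2)) :
  let nu1 := p x t * Cconj (p x t) in
  let nu2 := Ci * (Cconj (p x t) * D 1%nat 0%nat x t
                   - p x t * Cconj (D 1%nat 0%nat x t)) in
  let L := esym [l1; l2; l3; l4; l5; l6] in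
  let S := esym [mu1; mu2; Cconj mu1; Cconj mu2] in
  S 1%nat = - (Cr (1/2) * (nu2 / nu1)) + L 1%nat
  /\
  S 2%nat = - (Cr (1/4) * L 1%nat * (nu2 / nu1)) - Cr (1/4) * nu1
    + (- (Cr (5/64) * L 1%nat ^ 4) + Cr (3/8) * L 1%nat ^ 2 * L 2%nat
       - Cr (1/4) * L 2%nat ^ 2 - Cr (1/2) * L 1%nat * L 3%nat + L 4%nat) / nu1
    + Cr (1/2) * L 2%nat + Cr (1/8) * L 1%nat ^ 2
  /\
  S 3%nat = Cr (1/4) * nu2
    + (Cr (1/16) * L 1%nat ^ 2 - Cr (1/4) * L 2%nat) * (nu2 / nu1)
    - Cr (1/4) * L 1%nat * nu1
    + (Cr (1/64) * L 1%nat ^ 5 - Cr (1/8) * L 1%nat ^ 3 * L 2%nat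
       + Cr (1/8) * L 1%nat ^ 2 * L 3%nat + Cr (1/4) * L 1%nat * L 2%nat ^ 2
       - Cr (1/2) * L 2%nat * L 3%nat + L 5%nat) / nu1
    + Cr (1/2) * L 3%nat
  /\
  S 4%nat = Cr (1/8) * L 1%nat * nu2 - Cr (1/16) * (nu2 ^ 2 / nu1)
    - Cr (1/16) * L 1%nat ^ 2 * nu1
    + (- (Cr (1/32) * L 1%nat ^ 3) + Cr (1/8) * L 1%nat * L 2%nat
       - Cr (1/4) * L 3%nat) * (nu2 / nu1)
    + (- (Cr (1/256) * L 1%nat ^ 6) + Cr (1/32) * L 1%nat ^ 4 * L 2%nat
       - Cr (1/16) * L 1%nat ^ 3 * L 3%nat - Cr (1/16) * L 1%nat ^ 2 * L 2%nat ^ 2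
       + Cr (1/4) * L 1%nat * L 2%nat * L 3%nat - Cr (1/4) * L 3%nat ^ 2
       + L 6%nat) / nu1
    + Cr (1/32) * L 1%nat ^ 4 - Cr (1/8) * L 1%nat ^ 2 * L 2%nat
    + Cr (1/4) * L 1%nat * L 3%nat.
Proof.
  intros nu1 nu2 L S.
  unfold PsiAt, PsiM, Rpoly in *; cbn [m11 m12 m21 m22] in *.
  set (P := p x t) in *. set (X := D 1%nat 0%nat x t) in *. set (Y := D 2%nat 0%nat x t) in *.
  clearbody P X Y. clear Hsmooth Hnls Htwo.
  set (a1 := Cr (1/2) * Ci * (P * Cconj P) - Ci * Cr c1).
  set (a0 := Cr (1/4) * (P * Cconj X - X * Cconj P) + Cr (1/2) * Ci * Cr c2 * (P * Cconj P) - Ci * Cr c0).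
  set (b1 := - (Cr (1/2) * X) + Ci * Cr c2 * P).
  set (b0 := - (Cr (1/4) * Ci * Y) - Cr (1/2) * Ci * P * (P * Cconj P) - Cr (1/2) * Cr c2 * X + Ci * Cr c1 * P).
  set (g1 := Cr (1/2) * Cconj X + Ci * Cr c2 * Cconj P).
  set (g0 := - (Cr (1/4) * Ci * Cconj Y) - Cr (1/2) * Ci * Cconj P * (P * Cconj P) + Cr (1/2) * Cr c2 * Cconj X + Ci * Cr c1 * Cconj P).
  assert (Hm : b0 - Ci * P * (mu1 * mu2) = C0 /\ b1 + Ci * P * (mu1 + mu2) = C0).
  { assert (H := poly6C (b0 - Ci * P * (mu1 * mu2)) (b1 + Ci * P * (mu1 + mu2)) C0 C0 C0 C0 C0).
    destruct H as (H0 & H1 & _).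
    - intro l. eapply eq_sub. apply (Hmu l). unfold Psi12, b0, b1. cbn [Cpow]. ring.
    - split; assumption. }
  destruct Hm as [Hq Hs].
  assert (HL := poly6C
    (- (a0 * a0) - b0 * g0 - L 6%nat)
    (- ((Defs.C1 + Defs.C1) * a1 * a0) - b1 * g0 - b0 * g1 + L 5%nat)
    (- (a1 * a1) + (Defs.C1 + Defs.C1) * Ci * Cr c2 * a0 - Ci * P * g0 - b1 * g1 - Ci * Cconj P * b0 - L 4%nat)
    ((Defs.C1 + Defs.C1) * Ci * a0 + (Defs.C1 + Defs.C1) * Ci * Cr c2 * a1 - Ci * P * g1 - Ci * Cconj P * b1 + L 3%nat)
    (Cr c2 * Cr c2 + (Defs.C1 + Defs.C1) * Ci * a1 + P * Cconj P - L 2%nat)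
    (L 1%nat + (Cr c2 + Cr c2))
    C0).
  destruct HL as (HL6 & HL5 & HL4 & HL3 & HL2 & HL1 & _).
  { intro l. eapply eq_sub. apply (HR l). unfold L, prodlin, Psi11, Psi12, Psi21, a0, a1, b0, b1, g0, g1.
    cbn [Cpow esym fold_right]. ring [Ci2]. }
  apply addeq0' in HL1. apply subeq0' in HL2. apply addeq0 in HL3.
  apply subeq0' in HL4. apply addeq0 in HL5. apply subeq0' in HL6.
  assert (HP' := conj_nz _ Hp). assert (Hnu := nu_nz _ Hp).
  assert (Es : mu1 + mu2 = - b1 / (Ci * P)).
  { apply addeq0' in Hs. rewrite Hs. field. split; [exact Hp | exact Ci_nz]. }
  assert (Eq : mu1 * mu2 = b0 / (Ci * P)).
  { apply subeq0 in Hq. rewrite Hq. field. split; [exact Hp | exact Ci_nz]. }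
  assert (Esc : Cconj mu1 + Cconj mu2 = - Cconj b1 / (- Ci * Cconj P)).
  { rewrite <- Cconj_add, Es, Cconj_div, Cconj_opp, Cconj_mul, Cconj_Ci. reflexivity. }
  assert (Eqc : Cconj mu1 * Cconj mu2 = Cconj b0 / (- Ci * Cconj P)).
  { rewrite <- Cconj_mul, Eq, Cconj_div, Cconj_mul, Cconj_Ci. reflexivity. }
  assert (Cb1 : Cconj b1 = - (Cr (1/2) * Cconj X) - Ci * Cr c2 * Cconj P).
  { unfold b1. rewrite ?Cconj_add, ?Cconj_sub, ?Cconj_opp, ?Cconj_mul, ?Cconj_Cr, ?Cconj_Ci, ?Cconj_conj. ring. }
  assert (Cb0 : Cconj b0 = (Cr (1/4) * Ci * Cconj Y) + Cr (1/2) * Ci * Cconj P * (Cconj P * P) - Cr (1/2) * Cr c2 * Cconj X - Ci * Cr c1 * Cconj P).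
  { unfold b0. rewrite ?Cconj_add, ?Cconj_sub, ?Cconj_opp, ?Cconj_mul, ?Cconj_Cr, ?Cconj_Ci, ?Cconj_conj. ring. }
  rewrite Cb1 in Esc. rewrite Cb0 in Eqc. clear Cb1 Cb0 Hs Hq HR Hmu.
  assert (ES1 : S 1%nat = (mu1 + mu2) + (Cconj mu1 + Cconj mu2)).
  { unfold S; cbn [esym]. ring. }
  assert (ES2 : S 2%nat = mu1 * mu2 + Cconj mu1 * Cconj mu2 + (mu1 + mu2) * (Cconj mu1 + Cconj mu2)).
  { unfold S; cbn [esym]. ring. }
  assert (ES3 : S 3%nat = (mu1 + mu2) * (Cconj mu1 * Cconj mu2) + (Cconj mu1 + Cconj mu2) * (mu1 * mu2)).
  { unfold S; cbn [esym]. ring. }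
  assert (ES4 : S 4%nat = (mu1 * mu2) * (Cconj mu1 * Cconj mu2)).
  { unfold S; cbn [esym]. ring. }
  rewrite ES1, ES2, ES3, ES4, Es, Eq, Esc, Eqc, HL1, HL2, HL3, HL4, HL5, HL6.
  clear ES1 ES2 ES3 ES4 Es Eq Esc Eqc HL1 HL2 HL3 HL4 HL5 HL6 S L.
  unfold nu1, nu2, a0, a1, b0, b1, g0, g1. clear nu1 nu2 a0 a1 b0 b1 g0 g1.
  cbn [Cpow].
  rewrite ?k2, ?k4, ?k8, ?k16, ?k32, ?k64, ?k256, ?k564, ?k38.
  unfold C2.
  split; [|split; [|split]]; (field [Ci2]; repeat split; nzt).
Qed.
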